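(* Let $d \ge 1$ and $r \ge 1$ be integers, and let $X \subset \mathbb{R}^d$ be a finite set of points with $\left\lceil \frac{|X|}{2} \right\rceil \ge r$. Then there is a partition of $X$ into $r$ sets $X_1, \ldots, X_r$ and an affine hyperplane $L \subset \mathbb{R}^d$ such that $L \cap \operatorname{conv} X_j \neq \emptyset$ for every $j \in \{1,\ldots,r\}$.
   Context: $\operatorname{conv}$ denotes the convex hull. This is the case $k=d-1$ of the statement: for integers $0 \le k < d$ and finite $X \subset \mathbb{R}^d$ with $\lceil |X|(k+1)/(d+k+1)\rceil \ge r$, there is a partition of $X$ into $r$ sets and a $k$-dimensional affine subspace meeting the convex hull of each part; for $k=d-1$ the ratio $(k+1)/(d+k+1)$ equals $1/2$. *)

(* Defs.v *)
From HB Require Import structures.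
From mathcomp Require Import all_boot all_order all_algebra.
From mathcomp Require Import finmap.
From mathcomp Require Import reals.
Set Implicit Arguments. Unset Strict Implicit. Unset Printing Implicit Defensive.
Import Order.TTheory GRing.Theory Num.Theory.
Local Open Scope ring_scope.
Local Open Scope fset_scope.

Definition in_conv (R : realType) (d : nat) (A : {fset 'rV[R]_d}) (p : 'rV[R]_d) : Prop :=
  exists lam : 'rV[R]_d -> R,
    [/\ (forall x, x \in A -> 0 <= lam x),
        \sum_(x <- A) lam x = 1
      & p = \sum_(x <- A) lam x *: x].

Definition dotv (R : realType) (d : nat) (a p : 'rV[R]_d) : R :=
  \sum_(i < d) a ord0 i * p ord0 i.

Definition in_hyperplane (R : realType) (d : nat) (a : 'rV[R]_d) (b : R) (p : 'rV[R]_d) : Prop :=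
  dotv a p = b.

Definition part (R : realType) (d r : nat) (X : {fset 'rV[R]_d})
  (f : 'rV[R]_d -> 'I_r) (j : 'I_r) : {fset 'rV[R]_d} :=
  [fset x in X | f x == j].

(* Main.v *)
Require Import Defs.
From HB Require Import structures.
From mathcomp Require Import all_boot all_order all_algebra.
From mathcomp Require Import finmap.
From mathcomp Require Import reals.
From mathcomp Require Import ring lra zify.
Import Order.TTheory GRing.Theory Num.Theory.
Local Open Scope ring_scope.
Local Open Scope fset_scope.

Lemma exmin {T : eqType} {R : realDomainType} (g : T -> R) {s : seq T} :
  s != [::] -> exists2 x, x \in s & forall y, y \in s -> g x <= g y.
Proof.
elim: s => [//|a s IH] _.
case: (eqVneq s [::]) => [->|ne].
  by exists a; rewrite ?inE // => y; rewrite inE => /eqP ->.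
have [x xs Hx] := IH ne.
case: (leP (g a) (g x)) => h.
  exists a; first by rewrite inE eqxx.
  move=> y; rewrite inE => /orP [/eqP ->//|/Hx]; exact: le_trans.
exists x; first by rewrite inE xs orbT.
move=> y; rewrite inE => /orP [/eqP ->|/Hx //]; exact: ltW.
Qed.

Lemma exmax {T : eqType} {R : realDomainType} (g : T -> R) {s : seq T} :
  s != [::] -> exists2 x, x \in s & forall y, y \in s -> g y <= g x.
Proof.
move=> /(@exmin T R (fun x => - g x)) [x xs Hx]; exists x => // y /Hx.
by rewrite lerN2.
Qed.

Lemma key {R : realType} {d} (g : 'rV[R]_d -> R) r :
  forall X : {fset 'rV[R]_d}, (2 * r + 1 <= #|` X|)%N ->
  exists (f : 'rV[R]_d -> nat) (b : R), forall j, (j <= r)%N ->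
    exists p q, [/\ p \in X, q \in X, f p = j, f q = j & g p <= b <= g q].
Proof.
elim: r => [|r IH] X hX.
  have ne : (X : seq _) != [::] by case: (X : seq _) hX.
  have [x xs _] := exmin g ne.
  exists (fun _ => 0%N), (g x) => j; rewrite leqn0 => /eqP ->.
  by exists x, x; split; rewrite ?lexx.
have ne : (X : seq _) != [::] by case: (X : seq _) hX.
have [p pX Hp] := exmin g ne.
have c1 := cardfsD1 p X; rewrite pX in c1.
have ne1 : ((X `\ p) : seq _) != [::].
  rewrite -size_eq0 -lt0n; change (0 < #|` X `\ p|)%N; lia.
have [q qX1 Hq] := exmax g ne1.
have c2 := cardfsD1 q (X `\ p); rewrite qX1 in c2.
have hY : (2 * r + 1 <= #|` X `\ p `\ q|)%N by lia.
have [f [b H]] := IH _ hY.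
have YX1 : forall y, y \in X `\ p `\ q -> y \in X `\ p.
  by move=> y; rewrite in_fsetD1 => /andP [].
have YX : forall y, y \in X `\ p `\ q -> y \in X.
  by move=> y /YX1; rewrite in_fsetD1 => /andP [].
exists (fun x => if (x == p) || (x == q) then r.+1 else f x), b => j hj.
case: (eqVneq j r.+1) => [->|jn].
  have [y [z [yY zY _ _ /andP [yb bz]]]] := H 0%N isT.
  exists p, q; split => //.
  - by move: qX1; rewrite in_fsetD1 => /andP [].
  - by rewrite eqxx.
  - by rewrite eqxx orbT.
  - apply/andP; split.
    + exact: le_trans (Hp _ (YX _ yY)) yb.
    + exact: le_trans bz (Hq _ (YX1 _ zY)).
have hj' : (j <= r)%N by lia.
have [y [z [yY zY fy fz hb]]] := H j hj'.
have nyz : forall w, w \in X `\ p `\ q -> ((w == p) || (w == q)) = false.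
  move=> w; rewrite !in_fsetD1 => /and3P [wq wp _].
  by rewrite (negPf wq) (negPf wp).
exists y, z; split => //; [exact: YX|exact: YX|by rewrite nyz|by rewrite nyz].
Qed.

Lemma dot_delta (R : realType) d (c : 'rV[R]_d.+1) :
  dotv (delta_mx ord0 ord0) c = c ord0 ord0.
Proof.
rewrite /dotv (bigD1 ord0) //= big1 ?addr0 => [|i /negPf ni].
  by rewrite !mxE eqxx /= mul1r.
by rewrite !mxE ni andbF mul0r.
Qed.

Theorem mainTheorem1 (R : realType) (d r : nat) (X : {fset 'rV[R]_d}) :
  (1 <= d)%N -> (1 <= r)%N -> (r <= (#|` X| + 1) %/ 2)%N ->
  exists (f : 'rV[R]_d -> 'I_r) (a : 'rV[R]_d) (b : R),
    a != 0 /\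
    forall j : 'I_r, exists p : 'rV[R]_d,
      in_conv (part X f j) p /\ in_hyperplane a b p.
Proof.
case: d X => [|d] X // _; case: r => [|r] // _ hr.
have hX : (2 * r + 1 <= #|` X|)%N by lia.
have [f [b H]] := @key R d.+1 (fun x : 'rV[R]_d.+1 => x ord0 ord0) r X hX.
exists (fun x => inord (f x)), (delta_mx ord0 ord0), b; split.
  apply/eqP => /matrixP /(_ ord0 ord0); rewrite !mxE eqxx /=.
  by move/eqP; rewrite oner_eq0.
move=> j.
have [p [q [pX qX fp fq /andP [pb bq]]]] := H j (ltn_ord j).
set gp := p ord0 ord0 in pb *; set gq := q ord0 ord0 in bq *.
set t : R := if gp == gq then 1 else (gq - b) / (gq - gp).
have [t0 t1 tb] : [/\ 0 <= t, t <= 1 & (t * gp + (1 - t) * gq = b)%R].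
  rewrite /t; case: eqVneq => [e|ne].
    rewrite e in pb *; split; lra.
  have lt : 0 < gq - gp by rewrite subr_gt0 lt_neqAle ne (le_trans pb bq).
  split.
  - by apply: divr_ge0; lra.
  - by rewrite ler_pdivrMr // mul1r; lra.
  - by field; rewrite gt_eqF.
have inP : forall x, x \in X -> f x = j -> x \in part X (fun x => inord (f x)) j.
  by move=> x xX fx; rewrite /part !inE xX /= fx inord_val eqxx.
have pP := inP _ pX fp; have qP := inP _ qX fq.
have U := fset_uniq (part X (fun x => inord (f x)) j).
have S1 : forall (F : 'rV[R]_d.+1 -> 'rV[R]_d.+1) (z : 'rV[R]_d.+1),
    z \in part X (fun x => inord (f x)) j ->
    \sum_(x <- part X (fun x => inord (f x)) j) (if x == z then F x else 0) = F z.
  move=> F z zP; rewrite (bigD1_seq z) //= eqxx big1 ?addr0 // => x /negPf ->.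
  by [].
have S2 : forall (F : 'rV[R]_d.+1 -> R) (z : 'rV[R]_d.+1),
    z \in part X (fun x => inord (f x)) j ->
    \sum_(x <- part X (fun x => inord (f x)) j) (if x == z then F x else 0) = F z.
  move=> F z zP; rewrite (bigD1_seq z) //= eqxx big1 ?addr0 // => x /negPf ->.
  by [].
exists (t *: p + (1 - t) *: q)%R; split.
  exists (fun x => (if x == p then t else 0) + (if x == q then 1 - t else 0))%R.
  split.
  - move=> x _; apply: addr_ge0; case: ifP => _ //; lra.
  - rewrite big_split /= (S2 (fun _ => t) p pP) (S2 (fun _ => 1 - t) q qP).
    by rewrite addrC subrK.
  - under eq_bigr => x _ do rewrite scalerDl.
    rewrite big_split /=.
    have E : forall (s : R) (z x : 'rV[R]_d.+1), (if x == z then s else 0) *: x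
                              = (if x == z then s *: x else 0).
      by move=> s z x; case: (x == z); rewrite ?scale0r.
    have A1 : forall (s : R) z, z \in part X (fun x => inord (f x)) j ->
      \sum_(x <- part X (fun x => inord (f x)) j) (if x == z then s else 0) *: x
       = s *: z.
      move=> s z zP; rewrite -(S1 (fun x => s *: x) z zP).
      by apply: eq_bigr => x _; exact: E.
    by rewrite (A1 t p pP) (A1 (1 - t) q qP).
rewrite /in_hyperplane dot_delta !mxE.
exact: tb.
Qed.
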